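(* Let $\mathbb{P}_0=(\mathbb{P}_n)_{n\ge1}$ be an asymptotic law satisfying condition D and $\mathbf{G}_0=(G_n)_{n\ge1}$ an asymptotic regime satisfying condition E (with ranking function $\Lambda$ and proportion $\kappa^*$). Then for every $l\in\mathcal{L}$ with $Q_L(l)>0$ and every $i$, $\lim_{n\to\infty}q_{i,n}^*(1\mid l)=q_0^*(1\mid l)$, where $$q_0^*(1\mid l)=\begin{cases}\dfrac{\kappa^*-\mathbb{P}_0(\Lambda(L_i)>\omega_0)}{\mathbb{P}_0(\Lambda(L_i)=\omega_0)} & \text{if }\Lambda(l)=\omega_0,\\[2mm] I(\Lambda(l)>\omega_0) & \text{otherwise,}\end{cases}$$ with $\omega_0=\inf\{c\in\mathbb{R}:\mathbb{P}_0(\Lambda(L_i)>c)\le\kappa^*\}$, $\mathbb{P}_0(\Lambda(L_i)>c):=\sum_lQ_L(l)I(\Lambda(l)>c)$ and $\mathbb{P}_0(\Lambda(L_i)=c):=\sum_lQ_L(l)I(\Lambda(l)=c)$.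
   Context: Setting. For a cluster size $n\ge 1$, individuals $i=1,\dots,n$ have a covariate $L_i$ in a finite set $\mathcal{L}$, a binary treatment $A_i\in\{0,1\}$ and an outcome $Y_i$ in a finite set $\mathcal{Y}\subset\mathbb{R}$. Write $\mathbf{L}_n=(L_1,\dots,L_n)$ etc. The observed-data law $\mathbb{P}_n$ is generated by a structural equation model $L_i=f_{L_i}(\epsilon_{L_i})$, $A_i=f_{A_i}(\mathbf{L}_n,\epsilon_A)$ (arbitrary measurable $f_{A_i}$ and error $\epsilon_A$), $Y_i=f_{Y_i}(A_i,L_i,\epsilon_{Y_i})$. The model $\mathcal{M}_n^{AB}$ is the set of all such laws satisfying: (A1) (conditional noninterference) the $n$ error blocks $(\epsilon_{L_i},\epsilon_{Y_i})$, $i=1,\dots,n$, are mutually independent, and for each $i$, conditionally on $(A_i,L_i)$, $\epsilon_{Y_i}$ is independent of $(A_j,L_j,\epsilon_{Y_j})_{j\neq i}$; (A2) (structural invariance) $f_{L_i}=f_L$ and $f_{Y_i}=f_Y$ for all $i$; (A3) (identically distributed errors) the $\epsilon_{L_i}$ are identically distributed, and the conditional law of $\epsilon_{Y_i}$ given $(A_i,L_i)=b$ is the same for every $i$ (for which it is defined); (B1) (no individual-level confounding) for each $i$ and $a\in\{0,1\}$, $Y_i^{a}:=f_Y(a,L_i,\epsilon_{Y_i})$ is independent of $A_i$ given $L_i$. Under $\mathcal{M}_n^{AB}$ write $Q_L(l)=\mathbb{P}_n(L_i=l)$ and $Q_Y(y\mid a,l)=\mathbb{P}_n(Y_i=y\mid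 A_i=a,L_i=l)$ for any $i$ with $\mathbb{P}_n(A_i=a,L_i=l)>0$; these do not depend on $i$. Regimes. For $\kappa_n\in\{0,\dots,n\}$, $\Pi_n(\kappa_n)$ is the set of measurable maps $G_n:\mathcal{L}^n\times[0,1]\to\{0,1\}^n$ with $\sum_iG_n(\mathbf{l},u)_i=\kappa_n$. Given $G_n$, $\delta\sim\mathrm{Unif}[0,1]$ is independent of all errors, $A_i^{G_n+}=G_n(\mathbf{L}_n,\delta)_i$, $Y_i^{G_n}=f_Y(A_i^{G_n+},L_i,\epsilon_{Y_i})$; $\mathbb{P}_n^F$ is the joint law of factual and counterfactual variables, and $q^*_{i,n}(a\mid l)=\mathbb{P}_n^F(A_i^{G_n+}=a\mid L_i=l)$. Rank-preserving regimes. For $\Lambda:\mathcal{L}\to\mathbb{R}$, $\Pi^d_n(\kappa_n,L_i,\Lambda)\subset\Pi_n(\kappa_n)$ consists of the regimes that, given $\mathbf{L}_n$, set $\omega=\inf\{c\in\mathbb{R}:\#\{j:\Lambda(L_j)>c\}\le\kappa_n\}$ (with $\omega=-\infty$ if the set is all of $\mathbb{R}$), treat every $j$ with $\Lambda(L_j)>\omega$, and treat a uniformly random subset (chosen using $\delta$) of size $\kappa_n-\#\{j:\Lambda(L_j)>\omega\}$ of the individuals with $\Lambda(L_j)=\omega$, leaving everyone else untreated. Asymptotic laws and regimes. An asymptotic law is a sequence $\mathbb{P}_0=(\mathbb{P}_n)_{n\ge1}$, $\mathbb{P}_n$ a law for a cluster of size $n$. Condition D: (D1) $\mathbb{P}_n\in\mathcal{M}_n^{AB}$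 for all $n$; (D2) $f_L$, $f_Y$, the law of $\epsilon_{L_i}$ and the conditional law of $\epsilon_{Y_i}$ given $(A_i,L_i)$ are the same for all $n$ (so $Q_L$ and $Q_Y$ do not depend on $n$; the observed treatment mechanism may vary with $n$). An asymptotic regime is a sequence $\mathbf{G}_0=(G_n)_{n\ge1}$. Condition E: (E1) $G_n\in\Pi^d_n(\kappa_n,L_i,\Lambda)$ for every $n$, for one fixed $\Lambda$ not depending on $n$; (E2) $\kappa_n=\lfloor n\kappa^*\rfloor$ for a fixed $\kappa^*\in[0,1]$. *)

(* Defs.v *)
From HB Require Import structures.
From mathcomp Require Import all_boot all_order all_algebra.
From mathcomp Require Import all_classical all_reals all_analysis.
Set Implicit Arguments. Unset Strict Implicit. Unset Printing Implicit Defensive.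
Import Order.TTheory GRing.Theory Num.Theory.
Local Open Scope classical_set_scope.
Local Open Scope ring_scope.

Section Defs.
Variables (R : realType) (L : finType).

Definition is_pmf (Q : L -> R) : Prop :=
  (forall l, 0 <= Q l) /\ \sum_(l : L) Q l = 1.

Definition kappa_n (kappa : R) (n : nat) : nat := Num.truncn (n%:R * kappa).

(* omega = inf { c in R : #{ j : Lambda(L_j) > c } <= k }, valued in \bar R
   (it is -oo exactly when the set is all of R). *)
Definition omega_n (n : nat) (Lam : L -> R) (k : nat) (lv : {ffun 'I_n -> L})
  : \bar R :=
  ereal_inf [set c%:E | c in
     [set c : R | (#|[set j : 'I_n | (c < Lam (lv j))%R]| <= k)%N]].

Definition above_set n (Lam : L -> R) k (lv : {ffun 'I_n -> L}) : {set 'I_n} :=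
  [set j : 'I_n | (omega_n Lam k lv < (Lam (lv j))%:E)%E].

Definition ties_set n (Lam : L -> R) k (lv : {ffun 'I_n -> L}) : {set 'I_n} :=
  [set j : 'I_n | (Lam (lv j))%:E == omega_n Lam k lv].

(* A regime: maps (l_1..l_n, u) to the set of treated individuals
   (i.e. an element of {0,1}^n); u is the value of delta ~ Unif[0,1]. *)
Definition regime (n : nat) := {ffun 'I_n -> L} -> R -> {set 'I_n}.

Definition unit_itv : set R := [set u | 0 <= u <= 1].

Definition in_Pi n (k : nat) (G : regime n) : Prop :=
  (forall lv S, measurable [set u | unit_itv u /\ G lv u = S]) /\
  (forall lv u, unit_itv u -> #|G lv u| = k).

(* G in Pi^d_n(k, L_i, Lambda): treats everybody strictly above omega,
   plus a uniformly random subset (driven by delta ~ Unif[0,1]) of size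
   k - #above of the individuals tied at omega, nobody else. *)
Definition in_Pi_d n (k : nat) (Lam : L -> R) (G : regime n) : Prop :=
  in_Pi k G /\
  forall lv : {ffun 'I_n -> L},
    let A := above_set Lam k lv in
    let T := ties_set Lam k lv in
    let r := (k - #|A|)%N in
    (forall u, unit_itv u ->
       exists2 S : {set 'I_n}, (S \subset T) && (#|S| == r) & G lv u = A :|: S) /\
    (forall S : {set 'I_n}, S \subset T -> #|S| = r ->
       lebesgue_measure [set u | unit_itv u /\ G lv u = A :|: S]
         = ((('C(#|T|, r))%:R : R)^-1)%:E).

(* Joint law of (L_1..L_n) under condition D: i.i.d. with pmf Q_L. *)
Definition prodQ n (Q : L -> R) (lv : {ffun 'I_n -> L}) : R :=
  \prod_(j : 'I_n) Q (lv j).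

(* q^*_{i,n}(1 | l) = P^F(A_i^{G_n+} = 1, L_i = l) / P(L_i = l), where
   delta ~ Unif[0,1] is independent of L_n, and P(L_i = l) = Q_L(l).
   Individual i is given by its (0-based) index; for n <= i the value is 0. *)
Definition qstar n (Q : L -> R) (G : regime n) (i : nat) (l : L) : R :=
  (\sum_(lv : {ffun 'I_n -> L}) \sum_(j : 'I_n | val j == i)
     (lv j == l)%:R * prodQ Q lv *
     fine (lebesgue_measure [set u | unit_itv u /\ j \in G lv u])) / Q l.

Definition P0gt (Q : L -> R) (Lam : L -> R) (c : \bar R) : R :=
  \sum_(l : L) Q l * (c < (Lam l)%:E)%E%:R.
Definition P0eq (Q : L -> R) (Lam : L -> R) (c : \bar R) : R :=
  \sum_(l : L) Q l * ((Lam l)%:E == c)%:R.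

Definition omega0 (Q : L -> R) (Lam : L -> R) (kappa : R) : \bar R :=
  ereal_inf [set c%:E | c in [set c : R | P0gt Q Lam c%:E <= kappa]].

Definition q0 (Q : L -> R) (Lam : L -> R) (kappa : R) (l : L) : R :=
  let w := omega0 Q Lam kappa in
  if (Lam l)%:E == w then (kappa - P0gt Q Lam w) / P0eq Q Lam w
  else (w < (Lam l)%:E)%E%:R.

End Defs.

(* Main.v *)
Require Import Defs.
From HB Require Import structures.
From mathcomp Require Import all_boot all_order all_algebra.
From mathcomp Require Import all_classical all_reals all_analysis.
From mathcomp Require Import ring lra.
Set Implicit Arguments. Unset Strict Implicit. Unset Printing Implicit Defensive.
Import Order.TTheory GRing.Theory Num.Theory numFieldNormedType.Exports.
Local Open Scope classical_set_scope.
Local Open Scope ring_scope.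
Lemma le_eqVlt_eq (R : realType) (a b : R) : a = b -> a <= b.
Proof. by move=> ->. Qed.
Definition Wf (R : realType) (I : finType) (w : I -> R) (f : I -> R) (c : R) : R :=
  \sum_a w a * (c < f a)%R%:R.
Definition omg (R : realType) (I : finType) (w : I -> R) (f : I -> R) (K : R) : \bar R :=
  ereal_inf [set c%:E | c in [set c : R | Wf w f c <= K]].
Definition Weq (R : realType) (I : finType) (w : I -> R) (f : I -> R) (c : R) : R :=
  \sum_a w a * (f a == c)%R%:R.

Lemma om_gt (R : realType) (I : finType) (w f : I -> R) (K x : R) :
  (forall a, 0 <= w a) -> K < Wf w f x -> (x%:E < omg w f K)%E.
Proof.
move=> w0 Kx.
set c1 := \big[Num.min/(x+1)]_(a | x < f a) f a.
have xc1 : x < c1.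
  rewrite /c1; apply: (big_ind (fun y => x < y)) => //; first lra.
  by move=> u v; rewrite lt_min => -> ->.
have c1f a : x < f a -> c1 <= f a.
  by move=> xa; rewrite /c1 (bigD1 a) //= ge_min lexx.
apply: (@lt_le_trans _ _ c1%:E); first by rewrite lte_fin.
apply: le_ereal_inf_tmp => _ [c Hc <-]; rewrite lee_fin leNgt; apply/negP => cc1.
move: Hc => /=; apply/negP; rewrite -ltNge; apply: (lt_le_trans Kx).
apply: ler_sum => a _; apply: ler_wpM2l => //.
have [xa|_] := ltP x (f a); last by rewrite ler0n.
by rewrite (lt_le_trans cc1 (c1f a xa)).
Qed.

Lemma om_le (R : realType) (I : finType) (w f : I -> R) (K x : R) :
  Wf w f x <= K -> (omg w f K <= x%:E)%E.
Proof. by move=> h; apply: ereal_inf_lbound; exists x. Qed.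

Lemma om_ge (R : realType) (I : finType) (w f : I -> R) (K x : R) :
  (forall a, 0 <= w a) -> K < Wf w f x + Weq w f x -> (x%:E <= omg w f K)%E.
Proof.
move=> w0 Kx.
apply: le_ereal_inf_tmp => _ [c Hc <-]; rewrite lee_fin leNgt; apply/negP => cx.
move: Hc => /=; apply/negP; rewrite -ltNge; apply: (lt_le_trans Kx).
rewrite /Wf /Weq -big_split /=; apply: ler_sum => a _; rewrite -mulrDr.
apply: ler_wpM2l => //.
have [xa|] := ltP x (f a).
  by rewrite (lt_trans cx xa) gt_eqF // addr0.
rewrite le_eqVlt => /orP[/eqP ->|fx]; first by rewrite eqxx cx /= add0r.
by rewrite (lt_eqF fx) /= addr0.
Qed.

Lemma om_lt (R : realType) (I : finType) (w f : I -> R) (K x : R) :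
  Wf w f x + Weq w f x <= K -> (omg w f K < x%:E)%E.
Proof.
move=> Kx.
set c0 := \big[Num.max/(x-1)]_(a | f a < x) f a.
have c0x : c0 < x.
  rewrite /c0; apply: (big_ind (fun y => y < x)) => //; first lra.
  by move=> u v; rewrite gt_max => -> ->.
have c0f a : f a < x -> f a <= c0.
  by move=> xa; rewrite /c0 (bigD1 a) //= le_max lexx.
apply: (@le_lt_trans _ _ c0%:E); last by rewrite lte_fin.
apply: ereal_inf_lbound; exists c0 => //=.
apply: le_trans Kx; rewrite /Wf /Weq -big_split /=; apply: ler_sum => a _.
rewrite -mulrDr; apply: le_eqVlt_eq; congr (_ * _).
have [xa|] := ltP x (f a).
  by rewrite (lt_trans c0x xa) gt_eqF // addr0.
rewrite le_eqVlt => /orP[/eqP ->|fx]; first by rewrite eqxx c0x /= add0r.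
by rewrite (lt_eqF fx) ltNge (c0f a fx) /= addr0.
Qed.
Definition pw (R : realType) (L : finType) (n : nat) (nu : 'I_n -> L -> R)
  (lv : {ffun 'I_n -> L}) : R := \prod_i nu i (lv i).

Lemma prod_if1 (R : realType) (n : nat) (a : 'I_n) (g : 'I_n -> R) :
  \prod_i (if i == a then g i else 1) = g a.
Proof. by rewrite -big_mkcond /= big_pred1_eq. Qed.

Lemma sum_prodF (R : realType) (L : finType) (n : nat) (F : 'I_n -> L -> R) :
  \sum_(lv : {ffun 'I_n -> L}) \prod_i F i (lv i) = \prod_i \sum_m F i m.
Proof. by rewrite bigA_distr_bigA. Qed.

Lemma marg0 (R : realType) (L : finType) (n : nat) (nu : 'I_n -> L -> R) :
  (forall i, \sum_m nu i m = 1) -> \sum_lv pw nu lv = 1.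
Proof.
by move=> h1; rewrite /pw sum_prodF big1.
Qed.

Lemma marg1 (R : realType) (L : finType) (n : nat) (nu : 'I_n -> L -> R)
  (a : 'I_n) (h : L -> R) :
  (forall i, \sum_m nu i m = 1) ->
  \sum_lv pw nu lv * h (lv a) = \sum_m nu a m * h m.
Proof.
move=> h1.
pose F i m := nu i m * (if i == a then h m else 1).
transitivity (\sum_(lv : {ffun 'I_n -> L}) \prod_i F i (lv i)).
  apply: eq_bigr => lv _; rewrite /F big_split /= /pw.
  by congr (_ * _); rewrite -(prod_if1 a (fun i => h (lv i))).
rewrite sum_prodF (bigD1 a) //= [X in _ * X]big1 ?mulr1.
  by apply: eq_bigr => m _; rewrite /F eqxx.
move=> i /negbTE ia; rewrite -(h1 i); apply: eq_bigr => m _.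
by rewrite /F ia mulr1.
Qed.

Lemma marg2 (R : realType) (L : finType) (n : nat) (nu : 'I_n -> L -> R)
  (a b : 'I_n) (h1 h2 : L -> R) :
  (forall i, \sum_m nu i m = 1) -> a != b ->
  \sum_lv pw nu lv * (h1 (lv a) * h2 (lv b)) =
  (\sum_m nu a m * h1 m) * (\sum_m nu b m * h2 m).
Proof.
move=> hs ab.
pose F i m := nu i m * ((if i == a then h1 m else 1) * (if i == b then h2 m else 1)).
transitivity (\sum_(lv : {ffun 'I_n -> L}) \prod_i F i (lv i)).
  apply: eq_bigr => lv _; rewrite /F big_split /= /pw big_split /=.
  by rewrite (prod_if1 a (fun i => h1 (lv i))) (prod_if1 b (fun i => h2 (lv i))).
rewrite sum_prodF (bigD1 a) //= (bigD1 b) 1?eq_sym //=.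
have -> : \prod_(i < n | (i != a) && (i != b)) \sum_m F i m = 1.
  apply: big1 => i /andP[ia ib]; rewrite -(hs i); apply: eq_bigr => m _.
  by rewrite /F (negbTE ia) (negbTE ib) !mulr1.
rewrite mulr1; congr (_ * _); apply: eq_bigr => m _; rewrite /F.
  by rewrite eqxx (negbTE ab) mulr1.
by rewrite eqxx eq_sym (negbTE ab) mul1r.
Qed.

Lemma mom2 (R : realType) (L : finType) (n : nat) (nu : 'I_n -> L -> R)
  (Z : 'I_n -> L -> R) :
  (forall i, \sum_m nu i m = 1) -> (forall i m, 0 <= nu i m) ->
  (forall i, \sum_m nu i m * Z i m = 0) -> (forall i m, Z i m ^+ 2 <= 1) ->
  \sum_lv pw nu lv * (\sum_i Z i (lv i)) ^+ 2 <= n%:R.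
Proof.
move=> hs h0 hz hb.
apply: (@le_trans _ _ (\sum_(i < n) \sum_(j < n) \sum_lv pw nu lv * (Z i (lv i) * Z j (lv j)))).
  apply: le_eqVlt_eq.
  rewrite (eq_bigr (fun lv => \sum_(i < n) \sum_(j < n) pw nu lv * (Z i (lv i) * Z j (lv j)))); last first.
    move=> lv _; rewrite expr2 big_distrlr big_distrr /=.
    by apply: eq_bigr => i _; rewrite big_distrr.
  by rewrite exchange_big; apply: eq_bigr => i _; rewrite exchange_big.
rewrite -[n in _ <= n%:R]card_ord -sumr_const; apply: ler_sum => i _.
rewrite (bigD1 i) //=.
rewrite [X in _ + X]big1 ?addr0; last first.
  by move=> j ji; rewrite marg2 // 1?eq_sym // hz mul0r.
  rewrite (eq_bigr (fun lv => pw nu lv * (fun m => Z i m ^+ 2) (lv i))).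
    rewrite (@marg1 _ _ _ nu i (fun m => Z i m ^+ 2) hs) -(hs i); apply: ler_sum => m _.
    by rewrite -[X in _ <= X]mulr1; apply: ler_wpM2l.
by move=> lv _; rewrite expr2.
Qed.
Definition clamp (R : realType) (y : R) : R :=
  if y <= 0 then 0 else if 1 <= y then 1 else y.

Lemma clamp01 (R : realType) (y : R) : 0 <= clamp y <= 1.
Proof.
rewrite /clamp; case: (lerP y 0) => ?; first by apply/andP; split; lra.
by case: (lerP 1 y) => ?; apply/andP; split; lra.
Qed.

Lemma clamp_lip (R : realType) (a b : R) : `|clamp a - clamp b| <= `|a - b|.
Proof.
have h1 := ler_norm (a - b); have h2 := ler_norm (b - a).
rewrite distrC in h2.
rewrite /clamp ler_norml; case: (lerP a 0) => ?; case: (lerP 1 a) => ?;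
  case: (lerP b 0) => ?; case: (lerP 1 b) => ?; apply/andP; split; lra.
Qed.

Lemma clamp_id (R : realType) (y : R) : 0 <= y < 1 -> clamp y = y.
Proof.
move=> /andP[h1 h2]; rewrite /clamp; case: (lerP y 0) => h.
  by apply/eqP; rewrite eq_le h h1.
by case: (lerP 1 y) => h'; lra.
Qed.

Lemma clamp_le0 (R : realType) (y : R) : y <= 0 -> clamp y = 0.
Proof. by rewrite /clamp => ->. Qed.

Lemma clamp_ge1 (R : realType) (y : R) : 1 <= y -> clamp y = 1.
Proof. by rewrite /clamp => h; case: (lerP y 0) => h'; [lra|rewrite h]. Qed.

Lemma abs_le_of_sqr (R : realType) (z c : R) : 0 <= c -> z ^+ 2 <= c ^+ 2 -> `|z| <= c.
Proof.
move=> c0 h; rewrite -(@ler_pXn2r _ 2) //.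
by rewrite real_normK // num_real.
Qed.

Lemma pt_bound (R : realType) (N ka k g e t G E eps : R) :
  1 <= N -> 0 <= ka <= 1 -> N * ka - 1 < k <= N * ka -> 0 < e <= 1 ->
  ka = g + t * e -> 0 < E -> 0 < eps ->
  `|clamp ((k - G) / E) - clamp t| <=
   2 * eps / e + ((G - (N - 1) * g) ^+ 2 + (E - ((N - 1) * e + 1)) ^+ 2 + 1) /
     ((Num.min (e / 4) (eps / (3 + 2 * `|t|))) ^+ 2 * N ^+ 2).
Proof.
move=> N1 /andP[ka0 ka1] /andP[k1 k2] /andP[e0 e1] kaE E0 eps0.
set ga := Num.min (e / 4) (eps / (3 + 2 * `|t|)).
set ZX := G - (N - 1) * g; set ZE := E - ((N - 1) * e + 1).
set W := ZX ^+ 2 + ZE ^+ 2 + 1.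
have t0 : 0 <= `|t| by [].
have den0 : 0 < 3 + 2 * `|t| by lra.
have ga0 : 0 < ga by rewrite /ga lt_min; apply/andP; split;
  [lra | exact: divr_gt0].
have gae : ga <= e / 4 by rewrite /ga ge_min lexx.
have gaeps : ga * (3 + 2 * `|t|) <= eps.
  rewrite -ler_pdivlMr // /ga ge_min; apply/orP; right; exact: lexx.
have M0 : 0 < ga ^+ 2 * N ^+ 2 by apply: mulr_gt0; apply: exprn_gt0; lra.
have eps2 : 0 <= 2 * eps / e by apply: divr_ge0; lra.
have W0 : 0 <= W / (ga ^+ 2 * N ^+ 2).
  by apply: divr_ge0; [rewrite /W; nra | lra].
have Hc : `|clamp ((k - G) / E) - clamp t| <= 1.
  have := clamp01 ((k - G) / E); have := clamp01 t => /andP[? ?] /andP[? ?].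
  by rewrite ler_norml; apply/andP; split; lra.
have [WM|MW] := lerP W (ga ^+ 2 * N ^+ 2); last first.
  have : 1 <= W / (ga ^+ 2 * N ^+ 2) by rewrite ler_pdivlMr // mul1r ltW.
  lra.
have gN0 : 0 <= ga * N by apply: mulr_ge0; lra.
have sq : (ga * N) ^+ 2 = ga ^+ 2 * N ^+ 2 by rewrite exprMn.
have hZX : `|ZX| <= ga * N.
  by apply: abs_le_of_sqr => //; rewrite sq; apply: le_trans WM; rewrite /W; nra.
have hZE : `|ZE| <= ga * N.
  by apply: abs_le_of_sqr => //; rewrite sq; apply: le_trans WM; rewrite /W; nra.
have h1 : 1 <= ga * N.
  have : `|1 : R| <= ga * N.
    by apply: abs_le_of_sqr => //; rewrite sq; apply: le_trans WM; rewrite /W; nra.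
  by rewrite normr1.
have gNe : ga * N <= e / 4 * N by apply: ler_wpM2r; lra.
have hE : N * e / 2 <= E.
  move: hZE; rewrite ler_norml /ZE => /andP[? ?]; nra.
have Eid : (k - G) - t * E = (k - N * ka) + ka - t - ZX - t * ZE.
  by rewrite /ZX /ZE kaE; ring.
have hD : `|(k - G) - t * E| <= eps * N.
  rewrite Eid.
  have a1 : `|k - N * ka| <= 1 by rewrite ler_norml; apply/andP; split; lra.
  have a2 : `|ka| <= 1 by rewrite ger0_norm.
  have a3 : `|t * ZE| <= `|t| * (ga * N) by rewrite normrM; apply: ler_wpM2l.
  have tr := ler_normD; have tr2 := ler_normB.
  have b1 : `|k - N * ka + ka - t - ZX - t * ZE| <=
      `|k - N * ka| + `|ka| + `|t| + `|ZX| + `|t * ZE|.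
    apply: le_trans (ler_normB _ _) _; rewrite lerD2r.
    apply: le_trans (ler_normB _ _) _; rewrite lerD2r.
    apply: le_trans (ler_normB _ _) _; rewrite lerD2r.
    by apply: le_trans (ler_normD _ _) _.
  apply: le_trans b1 _.
  have : ga * N * (3 + 2 * `|t|) <= eps * N.
    by rewrite mulrAC; apply: ler_wpM2r; lra.
  nra.
have Ediv : (k - G) / E - t = ((k - G) - t * E) / E by field; lra.
apply: le_trans (clamp_lip _ _) _.
rewrite Ediv normrM normfV (gtr0_norm E0).
suff : `|k - G - t * E| / E <= 2 * eps / e by lra.
rewrite ler_pdivrMr //; apply: le_trans hD _.
have : 2 * eps / e * (N * e / 2) = eps * N by field; lra.
have : 2 * eps / e * (N * e / 2) <= 2 * eps / e * E by apply: ler_wpM2l.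
lra.
Qed.
Lemma P0gtE (R : realType) (L : finType) (Q Lam : L -> R) (c : R) :
  P0gt Q Lam c%:E = Wf Q Lam c.
Proof. by apply: eq_bigr => m _; rewrite lte_fin. Qed.

Lemma P0eqE (R : realType) (L : finType) (Q Lam : L -> R) (c : R) :
  P0eq Q Lam c%:E = Weq Q Lam c.
Proof. by apply: eq_bigr => m _; rewrite eqe. Qed.

Lemma omega0E (R : realType) (L : finType) (Q Lam : L -> R) (ka : R) :
  omega0 Q Lam ka = omg Q Lam ka.
Proof.
rewrite /omega0 /omg; congr ereal_inf; congr image;
  try by apply/funext => c /=; rewrite P0gtE.
Qed.

Lemma q0_clamp (R : realType) (L : finType) (Q Lam : L -> R) (ka : R) (l : L) :
  (forall m, 0 <= Q m) -> 0 < Weq Q Lam (Lam l) ->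
  q0 Q Lam ka l = clamp ((ka - Wf Q Lam (Lam l)) / Weq Q Lam (Lam l)).
Proof.
move=> Q0 e0; rewrite /q0 omega0E.
set x := Lam l; set g := Wf Q Lam x; set e := Weq Q Lam x.
have [kg|gk] := ltP ka g.
  have h := om_gt Q0 kg.
  rewrite (lt_eqF h) ltNge (ltW h) /= clamp_le0 //.
  by rewrite pmulr_lle0 ?invr_gt0 // ?subr_le0 ?ltW.
have [kge|gek] := ltP ka (g + e).
  have h : omg Q Lam ka = x%:E.
    by apply/eqP; rewrite eq_le om_le // om_ge.
  rewrite h eqxx P0gtE P0eqE -/g -/e clamp_id //.
  apply/andP; split; first by apply: divr_ge0; lra.
  by rewrite ltr_pdivrMr // mul1r; lra.
have h := om_lt gek.
rewrite (gt_eqF h) h /= clamp_ge1 //.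
by rewrite ler_pdivlMr // mul1r; lra.
Qed.
Lemma card_setb (R : realType) (n : nat) (P : pred 'I_n) :
  (#|[set j | P j]%SET|%:R : R) = \sum_j (P j)%:R.
Proof.
rewrite -sum1_card natr_sum big_mkcond /=; apply: eq_bigr => j _.
by rewrite inE; case: (P j).
Qed.

Lemma card_cset (n : nat) (P : pred 'I_n) :
  #|[set j | P j]| = #|[set j | P j]%SET|.
Proof.
apply: eq_card => j; rewrite [in RHS]inE.
by apply/idP/idP => [/set_mem //|h]; apply: mem_set.
Qed.

Lemma omega_nE (R : realType) (L : finType) (Lam : L -> R) (n k : nat)
  (lv : {ffun 'I_n -> L}) :
  omega_n Lam k lv = omg (fun _ => 1) (fun j => Lam (lv j)) k%:R.
Proof.
rewrite /omega_n /omg; congr ereal_inf; congr image; apply/funext => c /=.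
rewrite card_cset -(ler_nat R) card_setb /Wf; congr (_ <= _).
by apply: eq_bigr => j _; rewrite mul1r.
Qed.
Lemma card_S (n : nat) (T : {set 'I_n}) (j0 : 'I_n) (r : nat) : j0 \in T ->
  (#|[set S : {set 'I_n} | (S \subset T) && (#|S| == r) && (j0 \in S)]%SET| * #|T|
   = r * 'C(#|T|, r))%N.
Proof.
move=> j0T; case: r => [|r].
  rewrite mul0n; apply/eqP; rewrite muln_eq0; apply/orP; left; apply/eqP.
  apply: eq_card0 => S; rewrite !inE.
  apply/negbTE; apply/negP; case/andP => /andP[_ /eqP /cards0_eq ->]; by rewrite inE.
pose S' := [set B : {set 'I_n} | B \subset T :\ j0 & #|B| == r]%SET.
have -> : [set S : {set 'I_n} | (S \subset T) && (#|S| == r.+1) && (j0 \in S)]%SET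
    = (fun B => j0 |: B) @: S'.
  apply/setP => S; rewrite inE; apply/idP/imsetP.
    move=> /andP[/andP[ST /eqP cS] jS]; exists (S :\ j0); last by rewrite finset.setD1K.
    rewrite inE finset.setSD //=; move: cS; rewrite (cardsD1 j0) jS add1n => -[->].
    by rewrite eqxx.
  move=> [B]; rewrite inE => /andP[BT /eqP cB] ->.
  have jB : j0 \notin B by apply/negP => /(fintype.subsetP BT); rewrite !inE eqxx.
  rewrite finset.setU11 andbT cardsU1 jB cB add1n eqxx andbT.
  rewrite finset.subUset finset.sub1set j0T /=; exact: (fintype.subset_trans BT (finset.subD1set _ _)).
rewrite card_in_imset; last first.
  move=> B1 B2; rewrite !inE => /andP[B1T _] /andP[B2T _] e.
  have j1 : j0 \notin B1 by apply/negP => /(fintype.subsetP B1T); rewrite !inE eqxx.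
  have j2 : j0 \notin B2 by apply/negP => /(fintype.subsetP B2T); rewrite !inE eqxx.
  by rewrite -(finset.setU1K j1) e finset.setU1K.
rewrite cards_draws mulnC.
have hT : #|T| = #|T :\ j0|.+1 by rewrite (cardsD1 j0) j0T.
by rewrite -mul_bin_diag hT.
Qed.
Lemma bigU_mem (X : eqType) (T : Type) (s : seq X) (F : X -> set T) (u : T) :
  (\big[setU/set0]_(S <- s) F S) u <-> exists2 S, S \in s & F S u.
Proof.
elim: s => [|a s IH]; first by rewrite big_nil; split => // -[].
rewrite big_cons; split.
  case=> [Fa|/IH [S Ss FS]]; first by exists a => //; rewrite mem_head.
  by exists S => //; rewrite in_cons Ss orbT.
move=> [S]; rewrite in_cons => /orP[/eqP ->|Ss] FS; first by left.
by right; apply/IH; exists S.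
Qed.

Lemma meas_bigU (R : realType) (X : eqType) (s : seq X) (F : X -> set R) :
  uniq s -> (forall S, S \in s -> measurable (F S)) ->
  (forall S S', S \in s -> S' \in s -> S != S' -> F S `&` F S' = set0) ->
  lebesgue_measure (\big[setU/set0]_(S <- s) F S) =
  (\sum_(S <- s) lebesgue_measure (F S))%E.
Proof.
elim: s => [|a s IH]; first by rewrite !big_nil measure0.
move=> /= /andP[nas us] hm hd.
rewrite !big_cons measureU.
- congr (_ + _)%E; apply: IH => //.
  + by move=> S Ss; apply: hm; rewrite in_cons Ss orbT.
  + by move=> S S' Ss S's; apply: hd; rewrite in_cons ?Ss ?S's orbT.
- by apply: hm; rewrite mem_head.
- rewrite big_seq; apply: bigsetU_measurable => S Ss.
  by apply: hm; rewrite in_cons Ss orbT.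
- apply/seteqP; split => // u [Fa /bigU_mem [S Ss FS]].
  have : a != S by apply/negP => /eqP aS; move: nas; rewrite aS Ss.
  have Ss' : S \in a :: s by rewrite in_cons Ss orbT.
  move/(hd a S (mem_head _ _) Ss') => e.
  by have : (F a `&` F S) u by [split]; rewrite e.
Qed.
Lemma unit_itvE (R : realType) : @unit_itv R = [set` `[(0:R), 1]].
Proof. by apply/seteqP; split => u; rewrite /= in_itv. Qed.

Lemma p_formula (R : realType) (L : finType) (Lam : L -> R) (n k : nat)
  (G : regime R L n) (lv : {ffun 'I_n -> L}) (j0 : 'I_n) :
  in_Pi_d k Lam G ->
  fine (lebesgue_measure [set u | unit_itv u /\ j0 \in G lv u]) =
  clamp ((k%:R - #|[set j | Lam (lv j0) < Lam (lv j)]%SET|%:R) /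
         #|[set j | Lam (lv j) == Lam (lv j0)]%SET|%:R).
Proof.
move=> [[Gm _] Gd]; have [Hex Hmeas] := Gd lv.
set x := Lam (lv j0).
set f := fun j => Lam (lv j).
set Gc := #|[set j | x < Lam (lv j)]%SET|.
set Ec := #|[set j | Lam (lv j) == x]%SET|.
have Ec0 : (0 < Ec)%N by apply/card_gt0P; exists j0; rewrite inE.
have omE := omega_nE Lam k lv.
have WfG : Wf (fun _ => 1) f x = Gc%:R.
  by rewrite card_setb /Wf; apply: eq_bigr => j _; rewrite mul1r.
have WeqE : Weq (fun _ => 1) f x = Ec%:R.
  by rewrite card_setb /Weq; apply: eq_bigr => j _; rewrite mul1r.
have w0 : forall j : 'I_n, (0:R) <= 1 by move=> _; exact: ler01.
have Iu : lebesgue_measure (@unit_itv R) = 1%:E.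
  by rewrite unit_itvE lebesgue_measure_itv /= lte_fin ltr01 oppr0 adde0.
have [kG|Gk] := ltnP k Gc.
  have h : (x%:E < omega_n Lam k lv)%E.
    by rewrite omE; apply: om_gt => //; rewrite WfG ltr_nat.
  have -> : [set u | unit_itv u /\ j0 \in G lv u] = set0.
    apply/seteqP; split => // u [Iu' jG].
    have [S /andP[ST _] GS] := Hex u Iu'.
    move: jG; rewrite GS finset.in_setU => /orP[jA|jS].
      by move: jA; rewrite inE ltNge (ltW h).
    have := fintype.subsetP ST j0 jS; rewrite inE => /eqP e.
    by move: h; rewrite -/x e ltxx.
  rewrite measure0 /= clamp_le0 //; apply: mulr_le0_ge0.
    by rewrite subr_le0 ler_nat ltnW.
  by rewrite invr_ge0 ler0n.
have [GEk|kGE] := leqP (Gc + Ec) k.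
  have h : (omega_n Lam k lv < x%:E)%E.
    by rewrite omE; apply: om_lt; rewrite WfG WeqE -natrD ler_nat.
  have -> : [set u | unit_itv u /\ j0 \in G lv u] = @unit_itv R.
    apply/seteqP; split => u; first by case.
    move=> Iu'; split => //; have [S _ ->] := Hex u Iu'.
    by rewrite finset.in_setU inE h.
  rewrite Iu /= clamp_ge1 // ler_pdivlMr ?ltr0n // mul1r lerBrDl -natrD ler_nat.
  by [].
have h : omega_n Lam k lv = x%:E.
  apply/eqP; rewrite omE eq_le om_le ?om_ge //; first by rewrite WfG WeqE -natrD ltr_nat.
  by rewrite WfG ler_nat.
set Aset := [set j | x < Lam (lv j)]%SET.
set Tset := [set j | Lam (lv j) == x]%SET.
have AE : above_set Lam k lv = Aset by apply/setP => j; rewrite !inE h lte_fin.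
have TE : ties_set Lam k lv = Tset by apply/setP => j; rewrite !inE h eqe.
move: Hex Hmeas; rewrite /= AE TE -/Gc -/Ec => Hex Hmeas.
set r := (k - Gc)%N.
have j0T : j0 \in Tset by rewrite inE.
set SS := [set S : {set 'I_n} | (S \subset Tset) && (#|S| == r) && (j0 \in S)]%SET.
have key (S : {set 'I_n}) : S \subset Tset -> (Aset :|: S) :&: Tset = S.
  move=> ST; apply/setP => j; rewrite !inE.
  case jS: (j \in S).
    by have := fintype.subsetP ST j jS; rewrite inE => ->; rewrite orbT.
  rewrite orbF; case: eqP => [->|_]; last by rewrite andbF.
  by rewrite ltxx.
have setE : [set u | unit_itv u /\ j0 \in G lv u] =
    \big[setU/set0]_(S <- enum SS) [set u | unit_itv u /\ G lv u = Aset :|: S].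
  apply/seteqP; split => u.
    move=> [Iu' jG]; apply/bigU_mem.
    have [S /andP[ST /eqP cS] GS] := Hex u Iu'; exists S => //.
    rewrite mem_enum inE ST cS eqxx /=; move: jG; rewrite GS finset.in_setU inE.
    by rewrite ltxx.
  move/bigU_mem => [S]; rewrite mem_enum inE => /andP[_ jS] [Iu' GS].
  by split => //; rewrite GS finset.in_setU jS orbT.
rewrite setE meas_bigU; first last.
- move=> S S'; rewrite !mem_enum !inE => /andP[/andP[ST _] _] /andP[/andP[S'T _] _] SS'.
  apply/seteqP; split => // u [[_ G1] [_ G2]].
  by move: SS'; rewrite -(key S ST) -(key S' S'T) -G1 -G2 eqxx.
- by move=> S _; apply: Gm.
- exact: enum_uniq.
rewrite big_enum /=.
rewrite (eq_bigr (fun _ => ((('C(Ec, r))%:R : R)^-1)%:E)); last first.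
  by move=> S; rewrite inE => /andP[/andP[ST /eqP cS] _]; apply: Hmeas.
rewrite sumEFin /= sumr_const -(mulr_natr _ #|SS|).
have cnt := card_S r j0T; rewrite -/SS -/Ec in cnt.
have cntR : (#|SS|%:R * Ec%:R : R) = r%:R * ('C(Ec, r))%:R.
  by rewrite -!natrM cnt.
have rE : (r < Ec)%N by rewrite /r ltn_subLR // addnC.
have C0 : (0 < 'C(Ec, r))%N by rewrite bin_gt0 ltnW.
have EcR : (Ec%:R : R) != 0 by rewrite pnatr_eq0 -lt0n.
have CR : (('C(Ec, r))%:R : R) != 0 by rewrite pnatr_eq0 -lt0n.
have sE : (#|SS|%:R : R) = r%:R * ('C(Ec, r))%:R / Ec%:R.
  by rewrite -cntR mulfK.
rewrite -natrB // -/r clamp_id; last first.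
  apply/andP; split; first by apply: divr_ge0; rewrite ler0n.
  by rewrite ltr_pdivrMr ?ltr0n // mul1r ltr_nat.
by rewrite sE; field; apply/andP; split.
Qed.
Lemma mom_ind (R : realType) (L : finType) (n : nat) (nu : 'I_n -> L -> R)
  (Xf : L -> R) :
  (forall i, \sum_m nu i m = 1) -> (forall i m, 0 <= nu i m) ->
  (forall m, 0 <= Xf m <= 1) ->
  \sum_lv pw nu lv * (\sum_j Xf (lv j) - \sum_j (\sum_m nu j m * Xf m)) ^+ 2
   <= n%:R.
Proof.
move=> hs h0 hX.
set mu := fun j => \sum_m nu j m * Xf m.
have mu01 j : 0 <= mu j <= 1.
  apply/andP; split; first by apply: sumr_ge0 => m _; apply: mulr_ge0 => //; case/andP: (hX m).
  rewrite -(hs j); apply: ler_sum => m _.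
  by rewrite -[X in _ <= X]mulr1; apply: ler_wpM2l => //; case/andP: (hX m).
rewrite (eq_bigr (fun lv => pw nu lv * (\sum_j (fun j m => Xf m - mu j) j (lv j)) ^+ 2)).
  apply: (@mom2 _ _ _ nu (fun j m => Xf m - mu j)) => //.
    move=> j /=.
    rewrite (eq_bigr (fun m => nu j m * Xf m - mu j * nu j m)); last by move=> m _; ring.
    by rewrite sumrB -mulr_sumr hs mulr1 subrr.
  move=> j m /=; have := mu01 j; have := hX m => /andP[? ?] /andP[? ?]; nra.
by move=> lv _; rewrite sumrB.
Qed.

Lemma sum_delta (R : realType) (L : finType) (l : L) (h : L -> R) :
  \sum_m (m == l)%:R * h m = h l.
Proof.
rewrite (bigD1 l) //= eqxx mul1r big1 ?addr0 // => m /negbTE ->.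
by rewrite mul0r.
Qed.

Lemma sum_if1 (R : realType) (n : nat) (j0 : 'I_n) (a b : R) :
  \sum_(j < n) (if j == j0 then a else b) = (n%:R - 1) * b + a.
Proof.
rewrite (bigD1 j0) //= eqxx (eq_bigr (fun _ => b)); last by move=> j /negbTE ->.
rewrite sumr_const cardC1 card_ord -mulr_natl addrC.
have n0 : (0 < n)%N by case: j0 => /= j; case: n => //.
by rewrite -{2}(prednK n0) -addn1 natrD mulr1 addrK mulr_natl.
Qed.
Lemma qstar_bound (R : realType) (L : finType) (Q Lam : L -> R) (ka : R)
  (n : nat) (G : regime R L n) (i : nat) (l : L) (eps : R) :
  (forall m, 0 <= Q m) -> \sum_m Q m = 1 -> 0 <= ka <= 1 ->
  in_Pi_d (kappa_n ka n) Lam G -> 0 < Q l -> (i < n)%N -> 0 < eps ->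
  `|qstar Q G i l - clamp ((ka - Wf Q Lam (Lam l)) / Weq Q Lam (Lam l))| <=
  2 * eps / Weq Q Lam (Lam l) + (2 * n%:R + 1) /
    ((Num.min (Weq Q Lam (Lam l) / 4)
       (eps / (3 + 2 * `|(ka - Wf Q Lam (Lam l)) / Weq Q Lam (Lam l)|))) ^+ 2
     * n%:R ^+ 2).
Proof.
move=> Q0 Q1 ka01 Gd Ql hi eps0.
set x := Lam l; set g := Wf Q Lam x; set e := Weq Q Lam x.
set t := (ka - g) / e.
set ga := Num.min _ _.
set M := ga ^+ 2 * n%:R ^+ 2.
pose j0 : 'I_n := Ordinal hi.
pose nu (j : 'I_n) (m : L) : R := if j == j0 then (m == l)%:R else Q m.
have hs j : \sum_m nu j m = 1.
  rewrite /nu; case: (j == j0) => //.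
  rewrite -[X in _ = X](sum_delta l (fun _ => 1)).
  by apply: eq_bigr => m _; rewrite mulr1.
have h0 j m : 0 <= nu j m by rewrite /nu; case: (j == j0) => //; rewrite ler0n.
have e0 : 0 < e.
  rewrite /e /Weq (bigD1 l) //= eqxx mulr1.
  have : 0 <= \sum_(m | m != l) Q m * (Lam m == x)%:R.
    by apply: sumr_ge0 => m _; apply: mulr_ge0.
  lra.
have e1 : e <= 1.
  rewrite -Q1; apply: ler_sum => m _.
  by rewrite -[X in _ <= X]mulr1; apply: ler_wpM2l => //; case: (_ == _); rewrite ?ler01 ?lexx.
have n1 : (1 <= n%:R :> R) by rewrite ler1n (leq_ltn_trans (leq0n i) hi).
have M0 : 0 < M.
  apply: mulr_gt0; apply: exprn_gt0; last lra.
  rewrite /ga lt_min; apply/andP; split; first lra.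
  by apply: divr_gt0 => //; have := normr_ge0 t; lra.
pose p (lv : {ffun 'I_n -> L}) :=
  fine (lebesgue_measure [set u | unit_itv u /\ j0 \in G lv u]).
have qE : qstar Q G i l = \sum_lv pw nu lv * p lv.
  rewrite /qstar.
  rewrite (eq_bigr (fun lv => Q l * (pw nu lv * p lv))).
    by rewrite -big_distrr /= mulrC mulKf // gt_eqF.
  move=> lv _; rewrite (big_pred1 j0); last by move=> j; rewrite /= -val_eqE.
  rewrite mulrA; congr (_ * _).
  rewrite /prodQ /pw (bigD1 j0) //= [in RHS](bigD1 j0) //= /nu eqxx.
  rewrite [in RHS](eq_bigr (fun j => Q (lv j))); last by move=> j /negbTE ->.
  by case: eqP => [->|_]; rewrite ?mul0r ?mulr0 // !mul1r.
pose Xf (m : L) : R := (x < Lam m)%R%:R.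
pose Yf (m : L) : R := (Lam m == x)%R%:R.
pose W (lv : {ffun 'I_n -> L}) :=
  (\sum_j Xf (lv j) - \sum_j (\sum_m nu j m * Xf m)) ^+ 2 +
  (\sum_j Yf (lv j) - \sum_j (\sum_m nu j m * Yf m)) ^+ 2 + 1.
have keyb lv : pw nu lv * `|p lv - clamp t| <=
    pw nu lv * (2 * eps / e + W lv / M).
  case: (eqVneq (lv j0) l) => hl; last first.
    have -> : pw nu lv = 0 by rewrite /pw (bigD1 j0) //= /nu eqxx (negbTE hl) mul0r.
    by rewrite !mul0r.
  apply: ler_wpM2l; first by apply: prodr_ge0.
  rewrite /p (p_formula lv j0 Gd) !card_setb hl -/x.
  have -> : \sum_j ((x < Lam (lv j))%R%:R : R) = \sum_j Xf (lv j) by [].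
  have -> : \sum_j ((Lam (lv j) == x)%R%:R : R) = \sum_j Yf (lv j) by [].
  have muX : \sum_j (\sum_m nu j m * Xf m) = (n%:R - 1) * g + 0.
    rewrite -(sum_if1 j0 0 g); apply: eq_bigr => j _; rewrite /nu.
    by case: (j == j0); rewrite ?sum_delta /Xf ?ltxx.
  have muY : \sum_j (\sum_m nu j m * Yf m) = (n%:R - 1) * e + 1.
    rewrite -(sum_if1 j0 1 e); apply: eq_bigr => j _; rewrite /nu.
    by case: (j == j0); rewrite ?sum_delta /Yf ?eqxx.
  rewrite /W muX muY addr0.
  have [kl ku] : (kappa_n ka n)%:R <= n%:R * ka /\ n%:R * ka < (kappa_n ka n).+1%:R.
    by apply/andP; apply: truncn_itv; apply: mulr_ge0; [rewrite ler0n | case/andP: ka01].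
  apply: (@pt_bound _ n%:R ka) => //.
  - apply/andP; split; last by [].
    by move: ku; rewrite -addn1 natrD; lra.
  - by apply/andP; split.
  - by rewrite /t; field; rewrite gt_eqF.
  - rewrite (bigD1 j0) //= /Yf hl eqxx.
    have : 0 <= \sum_(j | j != j0) ((Lam (lv j) == x)%R%:R : R).
      by apply: sumr_ge0 => j _; rewrite ler0n.
    rewrite /= mulr1n; lra.
have pw0 lv : 0 <= pw nu lv by apply: prodr_ge0.
have cE : clamp t = \sum_lv pw nu lv * clamp t.
  by rewrite -big_distrl /= marg0 // mul1r.
rewrite qE [X in _ - X]cE -sumrB.
apply: le_trans (ler_norm_sum _ _ _) _.
apply: (@le_trans _ _ (\sum_lv pw nu lv * (2 * eps / e + W lv / M))).
  apply: ler_sum => lv _; rewrite -mulrBr normrM ger0_norm //; exact: keyb.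
rewrite (eq_bigr (fun lv => pw nu lv * (2 * eps / e) + pw nu lv * W lv / M));
  last by move=> lv _; rewrite mulrDr mulrA; congr (_ + _); rewrite -mulrA.
rewrite big_split /= -big_distrl /= marg0 // mul1r lerD2l -mulr_suml.
apply: ler_wpM2r; first by rewrite invr_ge0 ltW.
rewrite /W (eq_bigr (fun lv =>
   pw nu lv * (\sum_j Xf (lv j) - \sum_j (\sum_m nu j m * Xf m)) ^+ 2 +
   pw nu lv * (\sum_j Yf (lv j) - \sum_j (\sum_m nu j m * Yf m)) ^+ 2 +
   pw nu lv)); last by move=> lv _; rewrite !mulrDr mulr1.
rewrite !big_split /= marg0 //.
have hX := @mom_ind _ _ _ nu Xf hs h0.
have hY := @mom_ind _ _ _ nu Yf hs h0.
have := hX (fun m => ltac:(by rewrite /Xf; case: (_ < _); rewrite ?ler01 ?lexx)).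
have := hY (fun m => ltac:(by rewrite /Yf; case: (_ == _); rewrite ?ler01 ?lexx)).
lra.
Qed.
Theorem mainTheorem6 (R : realType) (L : finType) (Q : L -> R) (Lam : L -> R)
  (kappa : R) (Gs : forall n : nat, regime R L n) (i : nat) (l : L) :
  is_pmf Q ->
  0 <= kappa <= 1 ->
  (forall n, in_Pi_d (kappa_n kappa n) Lam (Gs n)) ->
  0 < Q l ->
  (fun n => qstar Q (Gs n) i l) @ \oo --> q0 Q Lam kappa l.
Proof.
move=> [Q0 Q1] ka01 Gd Ql.
set x := Lam l; set g := Wf Q Lam x; set e := Weq Q Lam x.
set t := (kappa - g) / e.
have e0 : 0 < e.
  rewrite /e /Weq (bigD1 l) //= eqxx mulr1.
  have : 0 <= \sum_(m | m != l) Q m * (Lam m == x)%:R.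
    by apply: sumr_ge0 => m _; apply: mulr_ge0.
  lra.
rewrite q0_clamp // -/x -/g -/e -/t.
apply/cvgrPdist_le => eps eps0.
set eps' := eps * e / (2 + e).
have eps'0 : 0 < eps' by apply: divr_gt0; [apply: mulr_gt0|lra].
set ga := Num.min (e / 4) (eps' / (3 + 2 * `|t|)).
have ga0 : 0 < ga.
  rewrite /ga lt_min; apply/andP; split; first lra.
  by apply: divr_gt0 => //; have := normr_ge0 t; lra.
set N := (Num.truncn (3 / (ga ^+ 2 * eps')) + i).+1.
exists N => // n /= Nn.
have hi : (i < n)%N by apply: leq_trans Nn; rewrite ltnS leq_addl.
have n1 : (1 <= n%:R :> R) by rewrite ler1n (leq_ltn_trans (leq0n i) hi).
have hN : 3 / (ga ^+ 2 * eps') < n%:R.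
  apply: lt_le_trans (truncnS_gt _) _; rewrite ler_nat.
  by apply: leq_trans Nn; rewrite ltnS leq_addr.
have g2 : 0 < ga ^+ 2 * eps' by apply: mulr_gt0 => //; apply: exprn_gt0.
have hN' : 3 < n%:R * (ga ^+ 2 * eps') by rewrite -ltr_pdivrMr.
have := qstar_bound Q0 Q1 ka01 (Gd n) Ql hi eps'0.
rewrite -/x -/g -/e -/t -/ga distrC => hb; apply: le_trans hb _.
have gan : 0 < ga ^+ 2 * n%:R ^+ 2 by apply: mulr_gt0; apply: exprn_gt0 => //; lra.
have B1 : (2 * n%:R + 1) / (ga ^+ 2 * n%:R ^+ 2) <= eps'.
  rewrite ler_pdivrMr //.
  have : n%:R * 3 <= n%:R * (n%:R * (ga ^+ 2 * eps')).
    by apply: ler_wpM2l; [lra | apply: ltW].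
  have -> : eps' * (ga ^+ 2 * n%:R ^+ 2) = n%:R * (n%:R * (ga ^+ 2 * eps')).
    by rewrite expr2; ring.
  lra.
have -> : eps = 2 * eps' / e + eps' by rewrite /eps'; field; apply/andP; split;
  rewrite ?gt_eqF //; lra.
by rewrite lerD2l.
Qed.
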